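(* Let $\lambda>0$, $f:\mathbb{R}^n\to\mathbb{R}$ twice continuously differentiable, $\varphi=f+\lambda\|\cdot\|_1$, and $x^0$ with $\mathcal{L}_\varphi(x^0)$ bounded and $f$ twice uniformly Lipschitz continuously differentiable on an open neighborhood of it. Suppose that at iteration $k$ of PGN2CM (described in the context) a Newton-CG step is invoked and the Capped CG method returns $d_{\rm type}=\mathrm{SOL}$. Define $g^{k+1}_{\neq0\varepsilon}:=(g(x^{k+1}))_{I^{k\varepsilon}_{\neq0}}$, where $I^{k\varepsilon}_{\neq0}=\{i:|x^k_i|>\varepsilon_g^{1/2}\}$. Then $j_k<+\infty$ and $$\varphi(x^k)-\varphi(x^{k+1})\ge c_{sol}\min\{\|g^{k+1}_{\neq0\varepsilon}\|^2\varepsilon_h^{-1},\varepsilon_h^3,\varepsilon_g\varepsilon_h\},$$ where $c_{sol}=\eta\min\Big\{\big(\frac{4}{\sqrt{(\zeta+4\hat\tau)^2+8L_H}+(\zeta+4\hat\tau)}\big)^2,\frac{9(1-\zeta-2\eta)^2\theta^2}{L_H^2},\theta^2,\frac{(1-\zeta)^2\theta^2}{4\max\{L_H/3,2\eta\}^2}\Big\}$.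
   Context: Constants $L_g,L_H,U_g>0$ with, for $x,y\in\mathcal{L}_\varphi(x^0)=\{x:\varphi(x)\le\varphi(x^0)\}$: $\|\nabla^2f(x)(y-x)-(\nabla f(y)-\nabla f(x))\|\le\frac{L_H}2\|y-x\|^2$, $f(y)\le f(x)+\nabla f(x)^\top(y-x)+\frac12(y-x)^\top\nabla^2f(x)(y-x)+\frac{L_H}6\|y-x\|^3$, $\|\nabla f(x)\|\le U_g$, $\|\nabla^2f(x)\|\le L_g$. $\mathrm{sgn}(0)=1$. $g(x)_i=(\nabla f(x))_i+\lambda$ if $x_i>0$, $(\nabla f(x))_i-\lambda$ if $x_i<0$, $(\nabla f(x))_i-\min\{\max\{-\lambda,(\nabla f(x))_i\},\lambda\}$ if $x_i=0$. For $x$: $I^\varepsilon_0=\{i:|x_i|\le\varepsilon_g^{1/2}\}$, $I^\varepsilon_{\neq0}=\{i:|x_i|>\varepsilon_g^{1/2}\}$; $g^\varepsilon(x)_i=(\nabla f(x))_i+\lambda$ if $x_i>\varepsilon_g^{1/2}$, $(\nabla f(x))_i-\lambda$ if $x_i<-\varepsilon_g^{1/2}$, $(\nabla f(x))_i-\min\{\max\{-\lambda-\varepsilon_g^{3/4},(\nabla f(x))_i\},\lambda+\varepsilon_g^{3/4}\}$ otherwise. Capped CG (inputs symmetric $H$, $g$, $\epsilon$, $\zeta\in(0,1)$, $\delta$, $\bar\tau$, $M\ge0$): $\bar H=H+\bar\tau\|g\|^\delta I$, $\kappa=\frac{M+\bar\tau\|g\|^\delta}\epsilon$, $\hat\zeta=\frac\zeta{3\kappa}$,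 $\tau=\frac{\sqrt\kappa}{\sqrt\kappa+1}$, $T=\frac{4\kappa^4}{(1-\sqrt\tau)^2}$, $y_0=0,r_0=g,p_0=-g$; if $p_0^\top\bar Hp_0<\epsilon\|p_0\|^2$ return $(p_0,\mathrm{NC})$; if $\|Hp_0\|>M\|p_0\|$ update $M=\|Hp_0\|/\|p_0\|$ and $\kappa,\hat\zeta,\tau,T$. Loop: $\alpha_j=\|r_j\|^2/p_j^\top\bar Hp_j$, $y_{j+1}=y_j+\alpha_jp_j$, $r_{j+1}=r_j+\alpha_j\bar Hp_j$, $\beta_{j+1}=\|r_{j+1}\|^2/\|r_j\|^2$, $p_{j+1}=-r_{j+1}+\beta_{j+1}p_j$, $j\leftarrow j+1$; update $M$ whenever $\|Hv\|>M\|v\|$ for $v\in\{p_j,y_j,r_j\}$; then if $y_j^\top\bar Hy_j<\epsilon\|y_j\|^2$ return $(y_j,\mathrm{NC})$; elif $\|r_j\|\le\hat\zeta\|r_0\|$ return $(y_j,\mathrm{SOL})$; elif $p_j^\top\bar Hp_j<\epsilon\|p_j\|^2$ return $(p_j,\mathrm{NC})$; elif $\|r_j\|>\sqrt T\tau^{j/2}\|r_0\|$, compute $y_{j+1}$, find $i<j$ with $(y_{j+1}-y_i)^\top\bar H(y_{j+1}-y_i)<\epsilon\|y_{j+1}-y_i\|^2$ and return $(y_{j+1}-y_i,\mathrm{NC})$. Newton-CG step of PGN2CM (parameters $0<\varepsilon_g,\varepsilon_h<1$, $\delta\in[0,1]$, $\hat\tau\ge1$, $\zeta\in(0,1)$,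 $\eta\in(0,\frac{1-\zeta}2)$, $\theta\in(0,1)$), invoked at $x^k$ when [$I^\varepsilon_0(x^k)=\emptyset$ or $g^\varepsilon(x^k)$ vanishes on it], $I^{k\varepsilon}_{\neq0}\neq\emptyset$ and $\|g^\varepsilon(x^k)_{I^{k\varepsilon}_{\neq0}}\|>\varepsilon_g$: with $H^k_{\neq0\varepsilon}=(\nabla^2f(x^k))_{I^{k\varepsilon}_{\neq0}}$, $g^k_{\neq0\varepsilon}=g^\varepsilon(x^k)_{I^{k\varepsilon}_{\neq0}}$, $\tau_k\in[\frac{2\varepsilon_h}{\|g^k_{\neq0\varepsilon}\|^\delta},\frac{2\hat\tau\varepsilon_h}{\|g^k_{\neq0\varepsilon}\|^\delta}]$, call Capped CG$(H^k_{\neq0\varepsilon},g^k_{\neq0\varepsilon},\varepsilon_h,\zeta,\delta,\tau_k,M)$ to get $(d,d_{\rm type})$; $d^k=0$ on $I^\varepsilon_0(x^k)$, $d^k_{I^{k\varepsilon}_{\neq0}}=d$ if SOL (and $-\mathrm{sgn}(d^\top g^k_{\neq0\varepsilon})\frac{|d^\top H^k_{\neq0\varepsilon}d|}{\|d\|^2}\frac d{\|d\|}$ if NC); $x^{k+1}=x^k+\theta^{j_k}d^k$, $j_k$ the smallest nonnegative integer $j$ with $\varphi(x^k+\theta^jd^k)<\varphi(x^k)-\eta\theta^{2j}\varepsilon_h\|d^k\|^2$. The iterates lie in $\mathcal{L}_\varphi(x^0)$. *)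

(* Defs.v *)
From HB Require Import structures.
From mathcomp Require Import all_boot all_order all_algebra.
From mathcomp Require Import all_classical all_reals all_analysis.
Set Implicit Arguments. Unset Strict Implicit. Unset Printing Implicit Defensive.
Import Order.TTheory GRing.Theory Num.Theory.
Import numFieldNormedType.Exports.
Local Open Scope ring_scope.

Section PGN2CM.
Variable R : realType.

Definition dotv m (u v : 'rV[R]_m) : R := (u *m v^T) 0 0.
Definition nrm m (v : 'rV[R]_m) : R := Num.sqrt (dotv v v).
Definition norm1 m (v : 'rV[R]_m) : R := \sum_i `|v 0 i|.
Definition mv m (H : 'M[R]_m) (v : 'rV[R]_m) : 'rV[R]_m := (H *m v^T)^T.
Definition quad m (H : 'M[R]_m) (v : 'rV[R]_m) : R := dotv v (mv H v).
(* sgn with sgn(0) = 1 *)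
Definition sgn (x : R) : R := if 0 <= x then 1 else -1.

(** A run is described by its iterates y_j, r_j, p_j and the value M_j of the
    (possibly updated) parameter M after the updates of iteration j. *)
Definition updM m (H : 'M[R]_m) (M : R) (v : 'rV[R]_m) : R :=
  if M * nrm v < nrm (mv H v) then nrm (mv H v) / nrm v else M.

Definition CappedCG_SOL m (H : 'M[R]_m) (g : 'rV[R]_m) (eps zeta delta taubar M0 : R)
    (d : 'rV[R]_m) : Prop :=
  let shift := taubar * (nrm g) `^ delta in
  let Hbar := H + shift%:M in
  let kappa (M : R) := (M + shift) / eps in
  let zhat (M : R) := zeta / (3 * kappa M) in
  let tau (M : R) := Num.sqrt (kappa M) / (Num.sqrt (kappa M) + 1) in
  let T (M : R) := 4 * kappa M ^+ 4 / (1 - Num.sqrt (tau M)) ^+ 2 in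
  exists (y r p : nat -> 'rV[R]_m) (M : nat -> R) (J : nat),
    [/\ y 0%N = 0, r 0%N = g, p 0%N = - g,
      ~ (quad Hbar (p 0%N) < eps * nrm (p 0%N) ^+ 2) &
      M 0%N = updM H M0 (p 0%N)] /\
    [/\
      (forall j : nat, (j < J)%N ->
        let alpha := nrm (r j) ^+ 2 / quad Hbar (p j) in
        [/\ y j.+1 = y j + alpha *: p j,
            r j.+1 = r j + alpha *: mv Hbar (p j),
            p j.+1 = - r j.+1 + (nrm (r j.+1) ^+ 2 / nrm (r j) ^+ 2) *: p j &
            M j.+1 = updM H (updM H (updM H (M j) (p j.+1)) (y j.+1)) (r j.+1)]),
      (1 <= J)%N &
        (forall j : nat, (1 <= j)%N -> (j < J)%N ->
          [/\ ~ (quad Hbar (y j) < eps * nrm (y j) ^+ 2),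
              ~ (nrm (r j) <= zhat (M j) * nrm (r 0%N)),
              ~ (quad Hbar (p j) < eps * nrm (p j) ^+ 2) &
              ~ (Num.sqrt (T (M j)) * Num.sqrt (tau (M j)) ^+ j * nrm (r 0%N)
                   < nrm (r j))])] /\
      [/\ ~ (quad Hbar (y J) < eps * nrm (y J) ^+ 2),
        nrm (r J) <= zhat (M J) * nrm (r 0%N) &
        d = y J].

Definition gvec n (lam : R) (gradx x : 'rV[R]_n) : 'rV[R]_n :=
  \row_i (if 0 < x 0 i then gradx 0 i + lam
          else if x 0 i < 0 then gradx 0 i - lam
          else gradx 0 i - Num.min (Num.max (- lam) (gradx 0 i)) lam).

Definition geps n (lam epsg : R) (gradx x : 'rV[R]_n) : 'rV[R]_n :=
  \row_i (if Num.sqrt epsg < x 0 i then gradx 0 i + lam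
          else if x 0 i < - Num.sqrt epsg then gradx 0 i - lam
          else gradx 0 i - Num.min (Num.max (- lam - epsg `^ (3/4)) (gradx 0 i))
                                    (lam + epsg `^ (3/4))).

Definition I0eps n (epsg : R) (x : 'rV[R]_n) : {set 'I_n} :=
  [set i | `|x 0 i| <= Num.sqrt epsg].
Definition Inz n (epsg : R) (x : 'rV[R]_n) : {set 'I_n} :=
  [set i | Num.sqrt epsg < `|x 0 i|].

(** selection matrix of an index set I : v *m (selmx I)^T = v_I, and
    u *m selmx I is u (indexed by I) extended by zero outside I. *)
Definition selmx n (I : {set 'I_n}) : 'M[R]_(#|I|, n) :=
  \matrix_(a, i) ((enum_val a == i)%:R).

End PGN2CM.

Definition phiobj (R : realType) n (f : 'rV[R]_n -> R) (lam : R) (x : 'rV[R]_n) : R :=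
  f x + lam * norm1 x.

Definition c_sol (R : realType) (LH zeta tauhat eta theta : R) : R :=
  eta * Num.min
    (Num.min ((4 / (Num.sqrt ((zeta + 4 * tauhat) ^+ 2 + 8 * LH) + (zeta + 4 * tauhat))) ^+ 2)
             (9 * (1 - zeta - 2 * eta) ^+ 2 * theta ^+ 2 / LH ^+ 2))
    (Num.min (theta ^+ 2)
             ((1 - zeta) ^+ 2 * theta ^+ 2 / (4 * Num.max (LH / 3) (2 * eta) ^+ 2))).

(* Main.v *)
Require Import Defs.
From HB Require Import structures.
From mathcomp Require Import all_boot all_order all_algebra.
From mathcomp Require Import all_classical all_reals all_analysis.
From mathcomp Require Import ring lra.
Import Order.TTheory GRing.Theory Num.Theory.
Import numFieldNormedType.Exports.
Local Open Scope ring_scope.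

Module Helpers.
Set Implicit Arguments. Unset Strict Implicit. Unset Printing Implicit Defensive.

Section Vec.
Variable R : realType.
Implicit Types (m : nat).

Lemma dotvE m (u v : 'rV[R]_m) : dotv u v = \sum_i u 0 i * v 0 i.
Proof. by rewrite /dotv !mxE; apply: eq_bigr => i _; rewrite mxE. Qed.

Lemma dotvC m (u v : 'rV[R]_m) : dotv u v = dotv v u.
Proof. by rewrite !dotvE; apply: eq_bigr => i _; rewrite mulrC. Qed.

Lemma dotvDl m (u v w : 'rV[R]_m) : dotv (u + v) w = dotv u w + dotv v w.
Proof. by rewrite !dotvE -big_split; apply: eq_bigr => i _; rewrite mxE mulrDl. Qed.

Lemma dotvDr m (u v w : 'rV[R]_m) : dotv w (u + v) = dotv w u + dotv w v.
Proof. by rewrite dotvC dotvDl !(dotvC w). Qed.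

Lemma dotvZl m a (u w : 'rV[R]_m) : dotv (a *: u) w = a * dotv u w.
Proof. by rewrite !dotvE mulr_sumr; apply: eq_bigr => i _; rewrite mxE mulrA. Qed.

Lemma dotvZr m a (u w : 'rV[R]_m) : dotv w (a *: u) = a * dotv w u.
Proof. by rewrite dotvC dotvZl dotvC. Qed.

Lemma dotvNl m (u w : 'rV[R]_m) : dotv (- u) w = - dotv u w.
Proof. by rewrite -scaleN1r dotvZl mulN1r. Qed.

Lemma dotvNr m (u w : 'rV[R]_m) : dotv w (- u) = - dotv w u.
Proof. by rewrite dotvC dotvNl dotvC. Qed.

Lemma dotvBl m (u v w : 'rV[R]_m) : dotv (u - v) w = dotv u w - dotv v w.
Proof. by rewrite dotvDl dotvNl. Qed.

Lemma dotvBr m (u v w : 'rV[R]_m) : dotv w (u - v) = dotv w u - dotv w v.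
Proof. by rewrite dotvDr dotvNr. Qed.

Lemma dotv0r m (w : 'rV[R]_m) : dotv w 0 = 0.
Proof. by rewrite dotvE big1 // => i _; rewrite mxE mulr0. Qed.

Lemma dotvv_ge0 m (v : 'rV[R]_m) : 0 <= dotv v v.
Proof. by rewrite dotvE; apply: sumr_ge0 => i _; rewrite -expr2 sqr_ge0. Qed.

Lemma nrm_ge0 m (v : 'rV[R]_m) : 0 <= nrm v.
Proof. exact: sqrtr_ge0. Qed.

Lemma nrm_sq m (v : 'rV[R]_m) : nrm v ^+ 2 = dotv v v.
Proof. by rewrite sqr_sqrtr // dotvv_ge0. Qed.

Lemma dotvv_eq0 m (v : 'rV[R]_m) : dotv v v = 0 -> v = 0.
Proof.
rewrite dotvE => H; apply/rowP => i; rewrite mxE.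
have h0 : forall j, true -> 0 <= v 0 j * v 0 j by move=> j _; rewrite -expr2 sqr_ge0.
have := psumr_eq0P h0 H (i:=i) isT.
by move=> /eqP; rewrite mulf_eq0 orbb => /eqP.
Qed.

Lemma nrm_eq0 m (v : 'rV[R]_m) : nrm v = 0 -> v = 0.
Proof. by move=> H; apply: dotvv_eq0; rewrite -nrm_sq H expr0n. Qed.

Lemma nrm0 m : nrm (0 : 'rV[R]_m) = 0.
Proof. by rewrite /nrm dotv0r sqrtr0. Qed.

Lemma CS m (u v : 'rV[R]_m) : dotv u v ^+ 2 <= dotv u u * dotv v v.
Proof.
set A := dotv u u; set B := dotv v v; set C := dotv u v.
have hA : 0 <= A by apply: dotvv_ge0.
have hB : 0 <= B by apply: dotvv_ge0.
have := dotvv_ge0 (B *: u - C *: v).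
rewrite !(dotvBl, dotvBr, dotvZl, dotvZr) -/A -/B -/C (dotvC v u) -/C => H.
have [B0|Bp] := eqVneq B 0.
  have -> : C = 0 by rewrite /C (dotvv_eq0 B0) dotv0r.
  by rewrite B0 expr0n /= mulr0.
have Bpos : 0 < B by rewrite lt0r Bp hB.
nra.
Qed.

Lemma CSn m (u v : 'rV[R]_m) : dotv u v <= nrm u * nrm v.
Proof.
have h1 := CS u v; have hu := nrm_ge0 u; have hv := nrm_ge0 v.
rewrite -!nrm_sq in h1.
have hp : 0 <= nrm u * nrm v by rewrite mulr_ge0.
nra.
Qed.

Lemma nrmD m (u v : 'rV[R]_m) : nrm (u + v) <= nrm u + nrm v.
Proof.
have h := CSn u v; have hu := nrm_ge0 u; have hv := nrm_ge0 v.
have huv := nrm_ge0 (u + v).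
have e : nrm (u + v) ^+ 2 = nrm u ^+ 2 + 2 * dotv u v + nrm v ^+ 2.
  by rewrite !nrm_sq dotvDl !dotvDr (dotvC v u); ring.
nra.
Qed.

Lemma nrmZ m a (v : 'rV[R]_m) : nrm (a *: v) = `|a| * nrm v.
Proof.
by rewrite /nrm dotvZl dotvZr mulrA -expr2 sqrtrM ?sqr_ge0 // sqrtr_sqr.
Qed.

Lemma nrmN m (v : 'rV[R]_m) : nrm (- v) = nrm v.
Proof. by rewrite -scaleN1r nrmZ normrN normr1 mul1r. Qed.

Lemma nrmB m (u v : 'rV[R]_m) : nrm (u - v) <= nrm u + nrm v.
Proof. by rewrite -(nrmN v) nrmD. Qed.

Lemma coord_le m (v : 'rV[R]_m) i : `|v 0 i| <= nrm v.
Proof.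
rewrite -[`|v 0 i|]sqrtr_sqr /nrm; apply: ler_wsqrtr.
rewrite dotvE (bigD1 i) //= -expr2 lerDl; apply: sumr_ge0 => j _.
by rewrite -expr2 sqr_ge0.
Qed.

Lemma mvD m (H : 'M[R]_m) u v : mv H (u + v) = mv H u + mv H v.
Proof. by rewrite /mv linearD /= mulmxDr linearD. Qed.
Lemma mvZ m (H : 'M[R]_m) a v : mv H (a *: v) = a *: mv H v.
Proof. by rewrite /mv linearZ /= -scalemxAr linearZ. Qed.
Lemma mvB m (H : 'M[R]_m) u v : mv H (u - v) = mv H u - mv H v.
Proof. by rewrite /mv linearB /= mulmxBr linearB. Qed.
Lemma mvDH m (H1 H2 : 'M[R]_m) v : mv (H1 + H2) v = mv H1 v + mv H2 v.
Proof. by rewrite /mv mulmxDl linearD. Qed.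
Lemma mvBH m (H1 H2 : 'M[R]_m) v : mv (H1 - H2) v = mv H1 v - mv H2 v.
Proof. by rewrite /mv mulmxBl linearB. Qed.
Lemma mv_scal m (s : R) (v : 'rV[R]_m) : mv s%:M v = s *: v.
Proof. by rewrite /mv mul_scalar_mx linearZ /= trmxK. Qed.
Lemma mv0 m (H : 'M[R]_m) : mv H 0 = 0.
Proof. by rewrite /mv linear0 mulmx0 linear0. Qed.

Lemma quadDs m (H : 'M[R]_m) (s : R) v : quad (H + s%:M) v = quad H v + s * dotv v v.
Proof. by rewrite /quad mvDH mv_scal dotvDr dotvZr. Qed.
Lemma quadZ m (H : 'M[R]_m) a v : quad H (a *: v) = a ^+ 2 * quad H v.
Proof. by rewrite /quad mvZ dotvZl dotvZr mulrA expr2. Qed.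

End Vec.


Section Sel.
Variable R : realType.
Variables (n : nat) (I : {set 'I_n}).
Local Notation P := (selmx R I).

Lemma PPt : P *m P^T = 1%:M.
Proof.
apply/matrixP => a b; rewrite !mxE (bigD1 (enum_val a)) //= big1 ?addr0.
  rewrite !mxE eqxx mul1r (inj_eq enum_val_inj) eq_sym //.
move=> i /negbTE hi; rewrite !mxE eq_sym hi mul0r //.
Qed.

Lemma selT_entry (u : 'rV[R]_n) a : (u *m P^T) 0 a = u 0 (enum_val a).
Proof.
rewrite mxE (bigD1 (enum_val a)) //= big1 ?addr0.
  by rewrite !mxE eqxx mulr1.
by move=> i /negbTE hi; rewrite !mxE eq_sym hi mulr0.
Qed.

Lemma sel_entry_out (v : 'rV[R]_#|I|) i : i \notin I -> (v *m P) 0 i = 0.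
Proof.
move=> hi; rewrite mxE big1 // => b _; rewrite mxE.
have : enum_val b != i by apply/eqP => e; move: hi; rewrite -e enum_valP.
by move/negbTE => ->; rewrite mulr0.
Qed.

Lemma sel_entry_in (v : 'rV[R]_#|I|) a : (v *m P) 0 (enum_val a) = v 0 a.
Proof.
rewrite mxE (bigD1 a) //= big1 ?addr0.
  by rewrite !mxE eqxx mulr1.
by move=> b hb; rewrite mxE (inj_eq enum_val_inj) (negbTE hb) mulr0.
Qed.

Lemma dotv_selsel (u v : 'rV[R]_#|I|) : dotv (u *m P) (v *m P) = dotv u v.
Proof. by rewrite /dotv trmx_mul mulmxA -(mulmxA u) PPt mulmx1. Qed.

Lemma dotv_sel (u : 'rV[R]_n) (v : 'rV[R]_#|I|) : dotv u (v *m P) = dotv (u *m P^T) v.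
Proof. by rewrite /dotv trmx_mul mulmxA. Qed.

Lemma mv_sel (H : 'M[R]_n) (v : 'rV[R]_#|I|) :
  (mv H (v *m P)) *m P^T = mv (P *m H *m P^T) v.
Proof. by rewrite /mv !trmx_mul !trmxK !mulmxA. Qed.

Lemma quad_sel (H : 'M[R]_n) (v : 'rV[R]_#|I|) :
  quad H (v *m P) = quad (P *m H *m P^T) v.
Proof. by rewrite /quad dotvC dotv_sel mv_sel dotvC. Qed.

Lemma nrm_sel (v : 'rV[R]_#|I|) : nrm (v *m P) = nrm v.
Proof. by rewrite /nrm dotv_selsel. Qed.

Lemma nrm_selT (u : 'rV[R]_n) : nrm (u *m P^T) <= nrm u.
Proof.
rewrite /nrm; apply: ler_wsqrtr; rewrite !dotvE.
under eq_bigr => a _ do rewrite selT_entry.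
rewrite -(big_enum_val (A := mem I) (fun i => u 0 i * u 0 i)) /=.
rewrite [X in _ <= X](bigID (mem I)) /= lerDl.
by apply: sumr_ge0 => i _; rewrite -expr2 sqr_ge0.
Qed.

End Sel.


Section CG.
Variable R : realType.

Lemma updM_ge m (H : 'M[R]_m) M v : M <= updM H M v.
Proof.
rewrite /updM; case: ifPn => // h.
have [v0|vp] := eqVneq (nrm v) 0.
  by move: h; rewrite v0 (nrm_eq0 v0) mv0 nrm0 mulr0 ltxx.
have vpos : 0 < nrm v by rewrite lt0r vp nrm_ge0.
by rewrite ler_pdivlMr // ltW.
Qed.

Lemma updM_bound m (H : 'M[R]_m) M v : nrm (mv H v) <= updM H M v * nrm v.
Proof.
rewrite /updM; case: ifPn => h; last by rewrite -leNgt in h.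
have [v0|vp] := eqVneq (nrm v) 0.
  by move: h; rewrite v0 (nrm_eq0 v0) mv0 nrm0 mulr0 ltxx.
by rewrite divfK.
Qed.

Lemma capped_facts m (H : 'M[R]_m) g eps zeta delta taubar M0 d :
  0 <= M0 ->
  CappedCG_SOL H g eps zeta delta taubar M0 d ->
  let s := taubar * nrm g `^ delta in
  exists r MJ, [/\ g = r - mv (H + s%:M) d, ~ (quad (H + s%:M) d < eps * nrm d ^+ 2),
    nrm r <= zeta / (3 * ((MJ + s)/eps)) * nrm g, nrm (mv H d) <= MJ * nrm d & 0 <= MJ].
Proof.
move=> M00 HC s; move: HC; rewrite /CappedCG_SOL -/s.
move=> [y [r [p [M [J [[y0 r0 p0 _ MM0] [[Hrec J1 _] [hq hr ->]]]]]]]].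
have inv : forall j, (j <= J)%N -> r j - mv (H + s%:M) (y j) = g.
  elim=> [|j IH] hj; first by rewrite y0 r0 mv0 subr0.
  have [hy hr' _ _] := Hrec j hj.
  by rewrite hy hr' mvD mvZ -IH ?(ltnW hj) // opprD addrACA subrr addr0.
have Mge : forall j, (j <= J)%N -> 0 <= M j.
  elim=> [|j IH] hj; first by rewrite MM0; apply: le_trans M00 (updM_ge _ _ _).
  have [_ _ _ ->] := Hrec j hj.
  by apply: le_trans (IH (ltnW hj)) _; do 3 apply: le_trans (updM_ge _ _ _).
exists (r J), (M J); split => //.
- by rewrite (inv J (leqnn J)).
- by rewrite -r0.
- case: J J1 Hrec hq hr inv Mge => // J _ Hrec _ _ _ _.
  have [_ _ _ ->] := Hrec J (ltnSn J).
  apply: le_trans (updM_bound _ _ _) _; apply: ler_wpM2r; first exact: nrm_ge0.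
  exact: updM_ge.
- exact: Mge.
Qed.

End CG.

Section Sol.
Variable R : realType.

Lemma sol_props m (Hk : 'M[R]_m) g d r (eps zeta s MJ : R) :
  0 < eps -> 0 < zeta < 1 -> 2 * eps <= s -> 0 < nrm g ->
  g = r - mv (Hk + s%:M) d ->
  nrm r <= zeta / (3 * ((MJ + s)/eps)) * nrm g ->
  nrm (mv Hk d) <= MJ * nrm d -> 0 <= MJ ->
  0 < nrm d /\ nrm r <= zeta / 2 * eps * nrm d.
Proof.
move=> e0 /andP[z0 z1] hs g0 hg hr hM MJ0.
have hK : 0 < MJ + s by lra.
have hng : nrm g <= nrm r + (MJ + s) * nrm d.
  rewrite hg; apply: le_trans (nrmB _ _) _; rewrite lerD2l mvDH mv_scal.
  apply: le_trans (nrmD _ _) _; rewrite nrmZ ger0_norm ?mulrDl; last lra.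
  by rewrite lerD2r.
have hz : zeta / (3 * ((MJ + s) / eps)) = zeta * eps / (3 * (MJ + s)).
  by field; apply/andP; split; rewrite gt_eqF // ?mulr_gt0.
rewrite hz in hr.
have hr2 : 3 * (MJ + s) * nrm r <= zeta * eps * nrm g.
  have e : 3 * (MJ + s) * (zeta * eps / (3 * (MJ + s)) * nrm g) = zeta * eps * nrm g.
    by field; rewrite gt_eqF.
  rewrite -e; apply: ler_wpM2l => //; lra.
have hd0 := nrm_ge0 d; have hr0 := nrm_ge0 r.
have key : nrm r <= zeta / 2 * eps * nrm d.
  have h3 : 3 * (MJ + s) * nrm r <= zeta * eps * (nrm r + (MJ + s) * nrm d).
    apply: le_trans hr2 _; apply: ler_wpM2l => //; rewrite mulr_ge0 //; lra.
  have h5 : 0 <= (MJ + s - zeta * eps) * nrm r by rewrite mulr_ge0 //; nra.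
  have h4 : (MJ + s) * (2 * nrm r - zeta * eps * nrm d) <= 0 by nra.
  have : 2 * nrm r - zeta * eps * nrm d <= 0.
    by rewrite -(pmulr_rle0 _ hK).
  lra.
split => //.
rewrite lt0r nrm_ge0 andbT; apply/eqP => w0.
move: hng; rewrite w0 mulr0 addr0 => hng.
move: key; rewrite w0 mulr0 => key; lra.
Qed.

End Sol.

Local Open Scope classical_set_scope.

Lemma pow_small (R : realType) (th del : R) : 0 < th < 1 -> 0 < del ->
  exists j : nat, th ^+ j < del.
Proof.
move=> /andP[t0 t1] d0.
have hz : `|th| < 1 by rewrite gtr0_norm.
have := @cvgr_dist_lt _ _ _ _ _ _ _ (cvg_geometric 1 hz) _ d0.
move=> H; have {}H := H ltac:(typeclasses eauto).
have [N _ HN] := H.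
exists N; have := HN N (leqnn N).
by rewrite /geometric /= sub0r normrN mul1r ger0_norm // exprn_ge0 // ltW.
Qed.

Lemma cont_line (R : realType) n (f : 'rV[R]_n -> R) x v :
  (forall y, differentiable f y) -> continuous (fun t : R => f (x + t *: v)).
Proof.
move=> fd t.
apply: continuous_comp; last exact: differentiable_continuous.
apply: cvgD; first exact: cvg_cst.
apply: cvgZl; exact: cvg_id.
Qed.

Lemma deriv_local (R: realType) n (f: 'rV[R]_n -> R) x v :
 derivable f x v -> forall e, 0 < e -> exists2 del : R, 0 < del &
   forall h : R, 0 < h < del -> `|(f (x + h *: v) - f x)/h - 'D_v f x| < e.
Proof.
move=> df e e0.
have := @cvgr_dist_lt _ _ _ _ _ _ _ df _ e0.
rewrite /derive.
move=> H.
have {}H := H ltac:(typeclasses eauto).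
have [del del0 Hd] := (iffLR (nbhs_ballP _ _) H).
exists del; first exact: del0.
move=> h /andP[h0 hd].
have hb : ball 0 del h.
 rewrite /ball /=.  rewrite sub0r normrN gtr0_norm //.
move: (Hd _ hb (lt0r_neq0 h0)) => /=.
by rewrite distrC [h *: v + x]addrC mulrC.
Qed.

Lemma abs_shift (R : realType) (a t : R) : `|t| < `|a| ->
  `|a + t| = `|a| + sgn a * t.
Proof.
rewrite /sgn; case: ifPn => ha ht.
  rewrite (ger0_norm ha) mul1r ger0_norm //.
  move: ht; rewrite (ger0_norm ha) => ht; have := ler_norm t.
  have := ler_normr t t; rewrite lexx /= => _.
  have : - t <= `|t| by rewrite -normrN ler_norm.
  lra.
rewrite -ltNge in ha.
rewrite (ltr0_norm ha) mulN1r ltr0_norm; first lra.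
move: ht; rewrite (ltr0_norm ha) => ht; have := ler_norm t; lra.
Qed.

Lemma zfacts (R : realType) (b LH : R) : 0 < b -> 0 < LH ->
  0 < 4 / (Num.sqrt (b ^+ 2 + 8 * LH) + b) /\
  LH * (4 / (Num.sqrt (b ^+ 2 + 8 * LH) + b)) ^+ 2 + b * (4 / (Num.sqrt (b ^+ 2 + 8 * LH) + b)) = 2.
Proof.
move=> hb0 hL.
set S := Num.sqrt (b ^+ 2 + 8 * LH); set z := 4 / (S + b).
have hS2 : S ^+ 2 = b ^+ 2 + 8 * LH.
  by rewrite /S sqr_sqrtr // addr_ge0 ?sqr_ge0 // mulr_ge0 // ltW.
have hS0 : 0 <= S by apply: sqrtr_ge0.
have hSb : 0 < S + b by lra.
have hz0 : 0 < z by rewrite /z divr_gt0.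
have hzS : z * (S + b) = 4 by rewrite /z divfK // gt_eqF.
split => //.
have h1 : z * S = 4 - z * b by rewrite -hzS mulrDr addrK.
have h2 : (z * S) ^+ 2 = z ^+ 2 * (b ^+ 2 + 8 * LH) by rewrite exprMn hS2.
rewrite h1 in h2.
have h3 : (4 - z * b) ^+ 2 - z ^+ 2 * (b ^+ 2 + 8 * LH) = 16 - 8 * (b * z) - 8 * (LH * z ^+ 2) by ring.
rewrite h2 subrr in h3; lra.
Qed.

Lemma cont_F (R : realType) n (f : 'rV[R]_n -> R) x v (a b c : R) :
  (forall y, differentiable f y) ->
  continuous (fun t : R => f (x + t *: v) + a * (b + t * c)).
Proof.
move=> fd t; apply: cvgD; first exact: cont_line.
apply: cvgM; first exact: cvg_cst.
apply: cvgD; first exact: cvg_cst.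
apply: cvgM; [exact: cvg_id | exact: cvg_cst].
Qed.


Lemma sq_le (R : realType) (a b : R) : 0 <= a -> a <= b -> a ^+ 2 <= b ^+ 2.
Proof. move=> a0 ab; nra. Qed.

Lemma cubic_step (R : realType) (e z et s Q g w u L : R) :
  0 < e -> 0 < z -> z < 1 -> 0 < et -> et < 1/2 -> 2 * e <= s -> e * w ^+ 2 <= Q ->
  g <= z / 2 * e * w ^+ 2 - Q -> 0 < u -> u <= 1 -> 0 < w -> 0 < L ->
  - (et * u ^+ 2 * e * w ^+ 2) <= u * g + 1 / 2 * (u ^+ 2 * (Q - s * w ^+ 2)) + L / 6 * (u * w) ^+ 3 ->
  3 * (2 - z) * e <= L * u ^+ 2 * w.
Proof.
move=> e0 z0 z1 et0 et1 hs hQ hg u0 u1 w0 L0 H.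
have H1 : - (et * u * e * w ^+ 2) <= g + 1 / 2 * (u * (Q - s * w ^+ 2)) + L / 6 * u ^+ 2 * w ^+ 3.
  rewrite -(ler_pM2l u0).
  have -> : u * - (et * u * e * w ^+ 2) = - (et * u ^+ 2 * e * w ^+ 2) by ring.
  have -> : u * (g + 1 / 2 * (u * (Q - s * w ^+ 2)) + L / 6 * u ^+ 2 * w ^+ 3) =
    u * g + 1 / 2 * (u ^+ 2 * (Q - s * w ^+ 2)) + L / 6 * (u * w) ^+ 3 by ring.
  exact: H.
have p1 : 0 <= (Q - e * w ^+ 2) * (1 - u / 2) by apply: mulr_ge0; lra.
have w2 : 0 < w ^+ 2 by rewrite exprn_gt0.
have p2 : 0 <= (s - 2 * e) * (u * w ^+ 2) by apply: mulr_ge0; [lra | apply: mulr_ge0; apply: ltW].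
have p3 : 0 <= (1 / 2 - et) * (u * e * w ^+ 2) by apply: mulr_ge0; [lra | apply: mulr_ge0; [apply: mulr_ge0|]; apply: ltW].
have H2 : e * w ^+ 2 * (1 - z / 2) <= w ^+ 2 * (L / 6 * u ^+ 2 * w).
  have -> : w ^+ 2 * (L / 6 * u ^+ 2 * w) = L / 6 * u ^+ 2 * w ^+ 3 by ring.
  clear H; nra.
have H3 : e * (1 - z / 2) <= L / 6 * u ^+ 2 * w.
  by rewrite -(ler_pM2l w2) mulrA [w ^+ 2 * e]mulrC.
clear -H3; lra.
Qed.

Lemma final_step (R : realType) (e z et th tau u w L : R) :
  0 < e -> 0 < z -> z < 1 -> 0 < et -> et < (1 - z) / 2 -> 0 < th -> 0 < u -> u <= tau ->
  tau <= 1 -> 0 < w -> 0 < L -> 3 * (2 - z) * e <= L * u ^+ 2 * w ->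
  9 * (1 - z - 2 * et) ^+ 2 * th ^+ 2 / L ^+ 2 * e ^+ 3 <= th ^+ 2 * tau ^+ 2 * e * w ^+ 2.
Proof.
move=> e0 z0 z1 et0 et1 th0 u0 ut t1 w0 L0 H.
have L2 : 0 < L ^+ 2 by rewrite exprn_gt0.
have a0 : 0 <= 3 * (2 - z) * e by rewrite !mulr_ge0 //; lra.
have H1 : (3 * (2 - z) * e) ^+ 2 <= (L * u ^+ 2 * w) ^+ 2.
  exact: sq_le.
have H2 : 9 * (1 - z - 2 * et) ^+ 2 * e ^+ 2 <= (3 * (2 - z) * e) ^+ 2.
  have -> : (3 * (2 - z) * e) ^+ 2 = 9 * (2 - z) ^+ 2 * e ^+ 2 by ring.
  rewrite ler_wpM2r ?sqr_ge0 // ler_wpM2l //; apply: sq_le; lra.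
have u2 : u ^+ 2 <= tau ^+ 2 by apply: sq_le => //; apply: ltW.
have u4 : u ^+ 4 <= u ^+ 2.
  have -> : u ^+ 4 = u ^+ 2 * u ^+ 2 by rewrite -exprD.
  rewrite ler_piMr ?sqr_ge0 // expr_le1 //; lra.
have H3 : 9 * (1 - z - 2 * et) ^+ 2 * e ^+ 2 <= L ^+ 2 * (tau ^+ 2 * w ^+ 2).
  apply: le_trans H2 _; apply: le_trans H1 _.
  have -> : (L * u ^+ 2 * w) ^+ 2 = L ^+ 2 * (u ^+ 4 * w ^+ 2) by ring.
  rewrite ler_wpM2l ?sqr_ge0 // ler_wpM2r ?sqr_ge0 //; exact: le_trans u4 u2.
have -> : 9 * (1 - z - 2 * et) ^+ 2 * th ^+ 2 / L ^+ 2 * e ^+ 3 =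
  (th ^+ 2 * e / L ^+ 2) * (9 * (1 - z - 2 * et) ^+ 2 * e ^+ 2) by field; rewrite gt_eqF.
have -> : th ^+ 2 * tau ^+ 2 * e * w ^+ 2 = (th ^+ 2 * e / L ^+ 2) * (L ^+ 2 * (tau ^+ 2 * w ^+ 2)).
  by field; rewrite gt_eqF.
rewrite ler_wpM2l //; rewrite divr_ge0 ?mulr_ge0 ?sqr_ge0 //; lra.
Qed.

End Helpers.
Import Helpers.
Local Open Scope classical_set_scope.

Theorem lemma10 (R : realType) (n : nat) (lam : R) (f : 'rV[R]_n -> R)
    (grad : 'rV[R]_n -> 'rV[R]_n) (hess : 'rV[R]_n -> 'M[R]_n)
    (x0 xk : 'rV[R]_n) (Lg LH Ug : R)
    (epsg epsh delta tauhat zeta eta theta tauk M : R)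
    (d : 'rV[R]_#|Inz epsg xk|) :
  let phi := phiobj f lam in
  let Lset := [set x | phi x <= phi x0] in
  (* lambda > 0, f twice continuously differentiable with gradient grad and Hessian hess *)
  0 < lam ->
  (forall x, differentiable f x) ->
  (forall x v, 'D_v f x = dotv (grad x) v) ->
  (forall x, differentiable grad x) ->
  (forall x v, 'D_v grad x = mv (hess x) v) ->
  continuous hess ->
  (* the level set is bounded *)
  (exists B : R, forall x, Lset x -> nrm x <= B) ->
  (* f is twice uniformly Lipschitz continuously differentiable on an open neighborhood *)
  (exists U : set 'rV[R]_n, [/\ open U, Lset `<=` U &
     exists L : R, forall x y, U x -> U y -> forall v,
       nrm (mv (hess x - hess y) v) <= L * nrm (x - y) * nrm v]) ->
  (* the constants L_g, L_H, U_g *)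
  0 < Lg -> 0 < LH -> 0 < Ug ->
  (forall x y, Lset x -> Lset y ->
     nrm (mv (hess x) (y - x) - (grad y - grad x)) <= LH / 2 * nrm (y - x) ^+ 2) ->
  (forall x y, Lset x -> Lset y ->
     f y <= f x + dotv (grad x) (y - x) + 1 / 2 * quad (hess x) (y - x)
            + LH / 6 * nrm (y - x) ^+ 3) ->
  (forall x, Lset x -> nrm (grad x) <= Ug) ->
  (forall x, Lset x -> forall v, nrm (mv (hess x) v) <= Lg * nrm v) ->
  (* parameters of PGN2CM *)
  0 < epsg < 1 -> 0 < epsh < 1 -> 0 <= delta <= 1 -> 1 <= tauhat ->
  0 < zeta < 1 -> 0 < eta < (1 - zeta) / 2 -> 0 < theta < 1 ->
  (* the k-th iterate lies in the level set *)
  Lset xk ->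
  let I := Inz epsg xk in
  let P := selmx R I in
  let gk := geps lam epsg (grad xk) xk *m P^T in
  let Hk := P *m hess xk *m P^T in
  (* conditions under which the Newton-CG step is invoked *)
  (I0eps epsg xk = finset.set0 \/
     (forall i, i \in I0eps epsg xk -> geps lam epsg (grad xk) xk 0 i = 0)) ->
  I != finset.set0 ->
  epsg < nrm gk ->
  2 * epsh / nrm gk `^ delta <= tauk <= 2 * tauhat * epsh / nrm gk `^ delta ->
  0 <= M ->
  (* Capped CG returns (d, SOL) *)
  CappedCG_SOL Hk gk epsh zeta delta tauk M d ->
  let dk := d *m P in
  let accept (j : nat) :=
    phi (xk + theta ^+ j *: dk) < phi xk - eta * theta ^+ (2 * j) * epsh * nrm dk ^+ 2 in
  (exists j : nat, accept j) /\
  (forall jk : nat, accept jk -> (forall j : nat, (j < jk)%N -> ~ accept j) ->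
     let xk1 := xk + theta ^+ jk *: dk in
     let gk1 := gvec lam (grad xk1) xk1 *m P^T in
     phi xk - phi xk1 >=
       c_sol LH zeta tauhat eta theta *
         Num.min (Num.min (nrm gk1 ^+ 2 / epsh) (epsh ^+ 3)) (epsg * epsh)).
Proof.
move=> phi Lset lam0 fdiff Df gdiff Dg hcont Lbdd Ulip Lg0 LH0 Ug0 Hlip Hcub Hgb Hhb.
move=> /andP[eg0 eg1] /andP[eh0 eh1] /andP[dl0 dl1] th1 /andP[z0 z1] /andP[et0 et1].
move=> /andP[t0 t1] Lxk I P gk Hk HI0 HI gkbig /andP[tk1 tk2] M0 HC dk accept.
have ng0 : 0 < nrm gk by apply: lt_trans gkbig.
have pg : 0 < nrm gk `^ delta by apply: powR_gt0.
set s := tauk * nrm gk `^ delta.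
have hs1 : 2 * epsh <= s.
  by rewrite /s -ler_pdivrMr // mulrC.
have hs2 : s <= 2 * tauhat * epsh.
  by rewrite /s -ler_pdivlMr // mulrC.
have [r [MJ [hg hq hr hM MJ0]]] := capped_facts M0 HC.
rewrite -/s in hg hq hr.
have hz : 0 < zeta < 1 by rewrite z0 z1.
have [w0 hrb] := sol_props eh0 hz hs1 ng0 hg hr hM MJ0.
set w := nrm d.
rewrite -/w in hrb w0.
have hdk : nrm dk = w by rewrite /dk nrm_sel.
set Q := quad (Hk + s%:M) d.
have hQ : epsh * w ^+ 2 <= Q by rewrite leNgt; apply/negP.
have hQk : quad Hk d = Q - s * w ^+ 2 by rewrite /Q quadDs -nrm_sq addrK.
have gTd : dotv gk d <= zeta / 2 * epsh * w ^+ 2 - Q.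
  rewrite hg dotvC dotvBr.
  change (dotv d (mv (Hk + s%:M) d)) with Q; rewrite lerD2r.
  apply: le_trans (CSn _ _) _; rewrite -/w expr2 mulrA [w * _]mulrC.
  by apply: ler_wpM2r => //; apply: nrm_ge0.
set sv := \row_i sgn (xk 0 i).
have hKI : (grad xk + lam *: sv) *m P^T = gk.
  apply/rowP => a; rewrite /gk !selT_entry /geps !mxE.
  have := enum_valP a; rewrite inE => hx.
  move: hx; set xi := xk 0 (enum_val a) => hx; rewrite /sgn.
  case: (ltrP (Num.sqrt epsg) xi) => h1.
    rewrite ifT ?mulr1 //; apply: le_trans (ltW h1); exact: sqrtr_ge0.
  case: (ltrP xi (- Num.sqrt epsg)) => h2.
    rewrite ifF ?mulrN1 //; apply/negbTE; rewrite -ltNge.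
    apply: lt_le_trans h2 _; rewrite oppr_le0; exact: sqrtr_ge0.
  exfalso; move: hx; rewrite ltNge => /negP; apply.
  by rewrite ler_norml h1 h2.
set c := dotv sv dk.
have hdir : dotv (grad xk) dk + lam * c = dotv gk d.
  by rewrite /c -dotvZl -dotvDl /dk dotv_sel hKI.
pose SP (t : R) := forall i, i \in I -> t * `|dk 0 i| < `|xk 0 i|.
have hSPsmall : forall t, 0 <= t -> t * w <= Num.sqrt epsg -> SP t.
  move=> t t0' h i hi.
  have h1 := coord_le dk i; rewrite hdk in h1.
  have h2 : Num.sqrt epsg < `|xk 0 i| by move: hi; rewrite inE.
  apply: le_lt_trans h2; apply: le_trans h; exact: ler_wpM2l.
have hSPmono : forall a b, 0 <= a -> a <= b -> SP b -> SP a.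
  move=> a b a0 ab hb i hi; apply: le_lt_trans (hb i hi).
  by apply: ler_wpM2r.
have hnotSP : forall t, 0 <= t -> ~ SP t -> epsg < (t * w) ^+ 2.
  move=> t t0' nsp; rewrite ltNge; apply/negP => h; apply: nsp.
  apply: hSPsmall => //.
  rewrite -(ger0_norm (mulr_ge0 t0' (nrm_ge0 d))) -sqrtr_sqr.
  exact: ler_wsqrtr.
have hn1 : forall t, 0 <= t -> SP t -> norm1 (xk + t *: dk) = norm1 xk + t * c.
  move=> t t0' hsp; rewrite /norm1 /c dotvE mulr_sumr.
  rewrite (eq_bigr (fun i => `|xk 0 i| + t * (sv 0 i * dk 0 i))) ?big_split // => i _.
  rewrite [(xk + _) 0 i]mxE [(t *: dk) 0 i]mxE [sv 0 i]mxE.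
  case: (boolP (i \in I)) => hi.
    rewrite abs_shift; first by rewrite mulrCA.
    rewrite normrM (ger0_norm t0'); exact: hsp.
  by rewrite /dk sel_entry_out // !mulr0 !addr0.
have hpsi : forall t, 0 <= t -> SP t ->
    phi (xk + t *: dk) = f (xk + t *: dk) + lam * (norm1 xk + t * c).
  by move=> t t0' hsp; rewrite /phi /phiobj hn1.
have hpsi0 : phi xk = f xk + lam * norm1 xk by [].
set gam := dotv gk d.
have hw2 : 0 < w ^+ 2 by rewrite exprn_gt0.
have hgam : gam <= - (1 - zeta / 2) * epsh * w ^+ 2 by rewrite /gam; clear -gTd hQ; nra.
have gneg : gam < 0.
  apply: le_lt_trans hgam _; rewrite mulNr mulNr oppr_lt0.
  by rewrite !mulr_gt0 //; clear -z1; lra.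
have LOC : exists2 del : R, 0 < del & forall h, 0 < h < del ->
    SP h /\ phi (xk + h *: dk) < phi xk - eta * h ^+ 2 * epsh * w ^+ 2.
  have ep : 0 < - gam / 2 by clear -gneg; lra.
  have [d1 d1p Hd1] := deriv_local (diff_derivable (v := dk) (fdiff xk)) ep.
  rewrite Df in Hd1.
  have e1 : 0 < Num.sqrt epsg / w by rewrite divr_gt0 // sqrtr_gt0.
  have e2 : 0 < - gam / (2 * eta * epsh * w ^+ 2).
    by rewrite divr_gt0 ?oppr_gt0 // !mulr_gt0.
  exists (Num.min d1 (Num.min (Num.sqrt epsg / w) (- gam / (2 * eta * epsh * w ^+ 2)))).
    by rewrite !lt_min d1p e1 e2.
  move=> h /andP[h0]; rewrite !lt_min => /and3P[hd1 hd2 hd3].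
  have hsp : SP h.
    apply: hSPsmall; first exact: ltW.
    by rewrite -ler_pdivlMr // ltW.
  split => //.
  rewrite hpsi ?(ltW h0) // hpsi0.
  have := Hd1 h (ltac:(by rewrite h0 hd1)).
  set q := (f (xk + h *: dk) - f xk) / h => hqq.
  have hq1 : q - dotv (grad xk) dk < - gam / 2 by apply: le_lt_trans (ler_norm _) hqq.
  have eq1 : f (xk + h *: dk) - f xk = q * h by rewrite /q divfK // gt_eqF.
  have hq2 : (q - dotv (grad xk) dk) * h < (- gam / 2) * h by rewrite ltr_pM2r.
  have hd3' : h * (2 * eta * epsh * w ^+ 2) < - gam by rewrite -ltr_pdivlMr // !mulr_gt0.
  have hdir' : dotv (grad xk) dk + lam * c = gam by [].
  clear -hdir' hd3' hq2 eq1 gneg h0; nra.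
split.
  have [del del0 Hdel] := LOC.
  have ht : 0 < theta < 1 by rewrite t0 t1.
  have [j hj] := pow_small ht del0.
  exists j; rewrite /accept hdk mulnC exprM.
  have hj' : 0 < theta ^+ j < del by rewrite exprn_gt0 ?hj.
  by case: (Hdel (theta ^+ j) hj').
move=> jk acc minj; cbv zeta.
set xk1 := xk + theta ^+ jk *: dk.
set gk1 := gvec lam (grad xk1) xk1 *m P^T.
have dec0 : eta * theta ^+ (2 * jk) * epsh * w ^+ 2 < phi xk - phi xk1.
  by move: acc; rewrite /accept hdk -/xk1 => acc; clear -acc; lra.
set b := zeta + 4 * tauhat.
set S := Num.sqrt (b ^+ 2 + 8 * LH).
set z := 4 / (S + b).
set Bc := 9 * (1 - zeta - 2 * eta) ^+ 2 * theta ^+ 2 / LH ^+ 2.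
set Cc := (1 - zeta) ^+ 2 * theta ^+ 2 / (4 * Num.max (LH / 3) (2 * eta) ^+ 2).
set cs := c_sol LH zeta tauhat eta theta.
have csE : cs =
    eta * Num.min (Num.min (z ^+ 2) Bc) (Num.min (theta ^+ 2) Cc) by [].
have hA0 : 0 <= z ^+ 2 by apply: sqr_ge0.
have hB0 : 0 <= Bc.
  by apply: divr_ge0; [apply: mulr_ge0; [apply: mulr_ge0; [by [] | apply: sqr_ge0] | apply: sqr_ge0] | apply: sqr_ge0].
have hT0 : 0 <= theta ^+ 2 by apply: sqr_ge0.
have hC0 : 0 <= Cc.
  by apply: divr_ge0; [apply: mulr_ge0; apply: sqr_ge0 | apply: mulr_ge0; [by [] | apply: sqr_ge0]].
have cs0 : 0 <= cs by rewrite csE mulr_ge0 ?(ltW et0) // !le_min hA0 hB0 hT0 hC0.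
have csA : cs <= eta * z ^+ 2 by rewrite csE ler_wpM2l ?(ltW et0) // !ge_min lexx.
have csB : cs <= eta * Bc by rewrite csE ler_wpM2l ?(ltW et0) // !ge_min lexx !orbT.
have csT : cs <= eta * theta ^+ 2.
  by rewrite csE ler_wpM2l ?(ltW et0) // !ge_min lexx !orbT.
set mm := Num.min (Num.min (nrm gk1 ^+ 2 / epsh) (epsh ^+ 3)) (epsg * epsh).
have mm0 : 0 <= mm.
  by rewrite !le_min divr_ge0 ?sqr_ge0 ?(ltW eh0) ?exprn_ge0 ?mulr_ge0 ?(ltW eh0) ?(ltW eg0).
have mm1 : mm <= nrm gk1 ^+ 2 / epsh by rewrite !ge_min lexx.
have mm2 : mm <= epsh ^+ 3 by rewrite !ge_min lexx !orbT.
have mm3 : mm <= epsg * epsh by rewrite !ge_min lexx !orbT.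
have csmm : forall X Y, mm <= X -> 0 <= X -> cs <= Y -> cs * mm <= Y * X.
  move=> X Y h1 h2 h3; apply: le_trans (ler_wpM2l cs0 h1) _.
  exact: ler_wpM2r.
rewrite /=.
have xk1E : xk1 = xk + theta ^+ jk *: dk by [].
have gk1E : gk1 = gvec lam (grad xk1) xk1 *m P^T by [].
clearbody xk1 gk1.
case: jk acc minj xk1E dec0 => [|j] acc minj xk1E dec0.
  rewrite muln0 expr0 mulr1 in dec0.
  have hx1 : xk1 = xk + 1 *: dk by rewrite xk1E expr0.
  case: (pselect (SP 1)) => hsp1; last first.
    have := hnotSP 1 ler01 hsp1; rewrite mul1r => hw1.
    apply: le_trans (csmm _ _ mm3 (ltac:(by rewrite mulr_ge0 // ltW)) csT) _.
    have h1 : eta * theta ^+ 2 * (epsg * epsh) <= eta * (epsg * epsh).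
      rewrite ler_wpM2r ?mulr_ge0 ?(ltW eg0) ?(ltW eh0) //.
      by rewrite -[leRHS]mulr1 ler_wpM2l ?(ltW et0) // expr_le1 // ltW.
    apply: le_trans h1 _; apply: ltW; apply: le_lt_trans dec0.
    by rewrite -mulrA ler_wpM2l ?(ltW et0) // [epsh * _]mulrC ler_wpM2r ?(ltW eh0) // ltW.
  have Lx1 : Lset xk1.
    rewrite /Lset /=; apply: le_trans Lxk; rewrite /=.
    have : 0 < eta * epsh * w ^+ 2 by rewrite !mulr_gt0.
    clear -dec0; lra.
  have hg1 : gk1 = (grad xk1 + lam *: sv) *m P^T.
    apply/rowP => a; rewrite gk1E !selT_entry /gvec !mxE.
    have hi := enum_valP a; have := hsp1 _ hi; rewrite mul1r.
    set i := enum_val a => hlt.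
    have -> : xk1 0 i = xk 0 i + dk 0 i by rewrite hx1 scale1r mxE.
    have ha := abs_shift hlt.
    rewrite /sgn; case: (lerP 0 (xk 0 i)) => hx.
      have hp : 0 < xk 0 i + dk 0 i.
        move: hlt; rewrite (ger0_norm hx) => hlt; have := ler_normr (dk 0 i) (dk 0 i).
        have : - dk 0 i <= `|dk 0 i| by rewrite -normrN ler_norm.
        clear -hlt; lra.
      by rewrite hp mulr1.
    have hp : xk 0 i + dk 0 i < 0.
      move: hlt; rewrite (ltr0_norm hx) => hlt; have := ler_norm (dk 0 i); clear -hlt; lra.
    by rewrite ltNge (ltW hp) /= hp mulrN1.
  have hdx : xk1 - xk = dk by rewrite hx1 scale1r addrC addKr.
  have hlip := Hlip xk xk1 Lxk Lx1; rewrite hdx hdk in hlip.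
  set e := mv (hess xk) dk - (grad xk1 - grad xk) in hlip.
  have hg1' : gk1 = r - s *: d - e *m P^T.
    have E1 : grad xk1 + lam *: sv = (grad xk + lam *: sv) + mv (hess xk) dk - e.
      by apply/rowP => i; rewrite /e !mxE; ring.
    rewrite hg1 E1 mulmxBl mulmxDl hKI /dk mv_sel -/Hk hg mvDH mv_scal.
    by rewrite opprD addrA addrAC subrK.
  have hng1 : nrm gk1 <= (b / 2) * epsh * w + LH / 2 * w ^+ 2.
    rewrite hg1'; apply: le_trans (nrmB _ _) _.
    apply: le_trans (lerD (nrmB _ _) (nrm_selT _ _)) _.
    rewrite nrmZ ger0_norm; last by clear -hs1 eh0; lra.
    have : s * w <= 2 * tauhat * epsh * w by rewrite ler_wpM2r // ltW.
    have eb : (zeta + 4 * tauhat) / 2 * epsh * w = zeta / 2 * epsh * w + 2 * tauhat * epsh * w by field.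
    rewrite /b -/w eb; clear -hrb hlip; lra.
  have hb0 : 0 < b by rewrite /b addr_gt0 // mulr_gt0 // (lt_le_trans ltr01 th1).
  have [hz0 hzeq] := zfacts hb0 LH0; rewrite -/S -/z in hz0 hzeq.
  clearbody z.
  have ng1p := nrm_ge0 gk1.
  have w0' := ltW w0.
  case: (lerP (z * epsh) w) => hw.
    have h1 : (z * epsh) ^+ 2 <= w ^+ 2 by rewrite ler_pXn2r // nnegrE mulr_ge0 // ltW.
    have h2 : eta * z ^+ 2 * epsh ^+ 3 <= eta * epsh * w ^+ 2.
      have -> : eta * z ^+ 2 * epsh ^+ 3 = eta * epsh * (z * epsh) ^+ 2 by ring.
      by rewrite ler_wpM2l // mulr_ge0 // ltW.
    apply: le_trans (csmm _ _ mm2 _ csA) _; first by rewrite exprn_ge0 // ltW.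
    clear -h2 dec0; lra.
  have hzg : z * nrm gk1 <= epsh * w.
    have h1 : z * nrm gk1 <= z * ((b / 2) * epsh * w + LH / 2 * w ^+ 2).
      by rewrite ler_wpM2l // ltW.
    have h2 : LH / 2 * z * w * w <= LH / 2 * z * w * (z * epsh).
      have hp : 0 <= LH / 2 * z * w.
        by apply: mulr_ge0; [apply: mulr_ge0; [apply: divr_ge0; [exact: ltW | by []] | exact: ltW] | exact: w0'].
      exact (ler_wpM2l hp (ltW hw)).
    have h4 : z * ((b / 2) * epsh * w + LH / 2 * w ^+ 2) <= epsh * w.
      have E1 : z * ((b / 2) * epsh * w + LH / 2 * w ^+ 2) =
        epsh * w * (b * z) / 2 + LH / 2 * z * w * w by ring.
      have E2 : epsh * w * (b * z) / 2 + LH / 2 * z * w * (z * epsh) =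
        epsh * w / 2 * (LH * z ^+ 2 + b * z) by ring.
      rewrite hzeq in E2; rewrite E1; clear -E2 h2; lra.
    exact: le_trans h1 h4.
  have hsq : (z * nrm gk1) ^+ 2 <= (epsh * w) ^+ 2.
    have hzn : 0 <= z * nrm gk1 by rewrite mulr_ge0 // ltW.
    clear -hzg hzn; nra.
  apply: le_trans (csmm _ _ mm1 _ csA) _; first by rewrite divr_ge0 ?sqr_ge0 // ltW.
  have -> : eta * z ^+ 2 * (nrm gk1 ^+ 2 / epsh) = eta / epsh * (z * nrm gk1) ^+ 2.
    by rewrite exprMn; ring.
  apply: le_trans (ler_wpM2l _ hsq) _; first by rewrite divr_ge0 // ltW.
  have -> : eta / epsh * (epsh * w) ^+ 2 = eta * epsh * w ^+ 2 by field; rewrite gt_eqF.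
  exact: ltW.
set tau := theta ^+ j.
have tau0 : 0 < tau by rewrite exprn_gt0.
have tau1 : tau <= 1 by rewrite exprn_ile1 // ltW.
have e2 : theta ^+ (2 * j.+1) = theta ^+ 2 * tau ^+ 2.
  by rewrite mulnC exprM (exprS theta j) exprMn.
rewrite e2 in dec0.
have rej : phi xk - eta * tau ^+ 2 * epsh * w ^+ 2 <= phi (xk + tau *: dk).
  have := minj j (ltnSn j); rewrite /accept hdk mulnC exprM -/tau => h.
  by rewrite leNgt; apply/negP => h'; apply: h.
have hk : 0 <= eta * theta ^+ 2 * epsh.
  by apply: mulr_ge0; [apply: mulr_ge0; [exact: ltW | exact: sqr_ge0] | exact: ltW].
case: (pselect (SP tau)) => hspt; last first.
  have hw1 := hnotSP tau (ltW tau0) hspt.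
  apply: le_trans (csmm _ _ mm3 _ csT) _; first by apply: mulr_ge0; apply: ltW.
  have h1 := ler_wpM2l hk (ltW hw1).
  have E1 : eta * theta ^+ 2 * epsh * (tau * w) ^+ 2 = eta * (theta ^+ 2 * tau ^+ 2) * epsh * w ^+ 2.
    by rewrite exprMn; ring.
  have E2 : eta * theta ^+ 2 * epsh * epsg = eta * theta ^+ 2 * (epsg * epsh) by ring.
  rewrite E1 E2 in h1; clear -h1 dec0; lra.
have [s1 [/andP[s1p s1t] hs1v Ls1]] : exists s1, [/\ 0 < s1 <= tau,
    phi xk - eta * s1 ^+ 2 * epsh * w ^+ 2 <= phi (xk + s1 *: dk) & Lset (xk + s1 *: dk)].
  case: (lerP (phi (xk + tau *: dk)) (phi x0)) => hL.
    by exists tau; split => //; rewrite tau0 lexx.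
  have [del del0 Hdel] := LOC.
  set s' := Num.min (del / 2) (tau / 2).
  have s'0 : 0 < s' by rewrite lt_min !divr_gt0.
  have hd2 : del / 2 < del by clear -del0; lra.
  have ht2 : tau / 2 < tau by clear -tau0; lra.
  have s'd : s' < del by rewrite gt_min hd2.
  have s't : s' < tau by rewrite gt_min ht2 orbT.
  have [hsp' hlt'] := Hdel s' (ltac:(by rewrite s'0 s'd)).
  pose F := fun t : R => f (xk + t *: dk) + lam * (norm1 xk + t * c).
  have Fc : continuous F by apply: cont_F.
  have FsE : forall t, 0 <= t -> SP t -> phi (xk + t *: dk) = F t by move=> t ht hsp; rewrite hpsi.
  have hF1 : F s' < phi x0.
    rewrite -FsE ?(ltW s'0) //; apply: lt_le_trans hlt' _; apply: le_trans Lxk.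
    have : 0 <= eta * s' ^+ 2 * epsh * w ^+ 2.
      by apply: mulr_ge0; [apply: mulr_ge0; [apply: mulr_ge0; [exact: ltW | exact: sqr_ge0] | exact: ltW] | exact: sqr_ge0].
    clear; lra.
  have hF2 : phi x0 < F tau by rewrite -FsE ?(ltW tau0).
  have hv : Num.min (F s') (F tau) <= phi x0 <= Num.max (F s') (F tau).
    by rewrite ge_min le_max (ltW hF1) (ltW hF2) orbT.
  have [c1 hc1 Fc1] := IVT (ltW s't) (continuous_subspaceT Fc) hv.
  move: hc1; rewrite in_itv /= => /andP[c1a c1b].
  have c10 : 0 < c1 by apply: lt_le_trans s'0 c1a.
  have hspc : SP c1 by apply: hSPmono (ltW c10) c1b hspt.
  exists c1; split.
  - by rewrite c10 c1b.
  - rewrite FsE ?(ltW c10) // Fc1; apply: le_trans Lxk.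
    have : 0 <= eta * c1 ^+ 2 * epsh * w ^+ 2.
      by apply: mulr_ge0; [apply: mulr_ge0; [apply: mulr_ge0; [exact: ltW | exact: sqr_ge0] | exact: ltW] | exact: sqr_ge0].
    clear; lra.
  - by rewrite /Lset /= FsE ?(ltW c10) // Fc1.
have hsp1 : SP s1 by apply: hSPmono (ltW s1p) s1t hspt.
have hc := Hcub xk (xk + s1 *: dk) Lxk Ls1.
have hy : xk + s1 *: dk - xk = s1 *: dk by rewrite addrC addKr.
rewrite hy dotvZr quadZ nrmZ (ger0_norm (ltW s1p)) hdk /dk quad_sel -/Hk -/dk hQk in hc.
rewrite (hpsi s1 (ltW s1p) hsp1) hpsi0 in hs1v.
have hdir' : dotv (grad xk) dk + lam * c = gam by [].
have hmain : - (eta * s1 ^+ 2 * epsh * w ^+ 2) <=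
    s1 * gam + 1 / 2 * (s1 ^+ 2 * (Q - s * w ^+ 2)) + LH / 6 * (s1 * w) ^+ 3.
  clear -hc hs1v hdir'.
  have E : s1 * gam = s1 * dotv (grad xk) dk + lam * (s1 * c) by rewrite -hdir'; ring.
  rewrite E; lra.
have et2 : eta < 1 / 2 by clear -et1 z0; lra.
have gTd' : gam <= zeta / 2 * epsh * w ^+ 2 - Q by [].
have hK := cubic_step eh0 z0 z1 et0 et2 hs1 hQ gTd' s1p (le_trans s1t tau1) w0 LH0 hmain.
have hfin := final_step eh0 z0 z1 et0 et1 t0 s1p s1t tau1 w0 LH0 hK.
apply: le_trans (csmm _ _ mm2 _ csB) _; first by rewrite exprn_ge0 // ltW.
have E : eta * Bc * epsh ^+ 3 = eta * (9 * (1 - zeta - 2 * eta) ^+ 2 * theta ^+ 2 / LH ^+ 2 * epsh ^+ 3).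
  by rewrite /Bc; ring.
rewrite E.
have h2 := ler_wpM2l (ltW et0) hfin.
clear -h2 dec0; lra.
Qed.
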